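(* Let $F_3=|0\rangle\langle0|\otimes I_2\otimes I_2+|1\rangle\langle1|\otimes\mathrm{SWAP}$ be the Fredkin gate and $U_5=(T_{AB}\otimes I_2)F_3=|0\rangle\langle0|\otimes I_2\otimes I_2+|1\rangle\langle1|\otimes(\sigma_1\otimes I_2)\,\mathrm{SWAP}$. Then $\mathrm{sr}(U_5)=5$.
   Context: $I_2$ is the $2\times 2$ identity, $\sigma_1=\begin{bmatrix}0&1\\1&0\end{bmatrix}$, $\{|0\rangle,|1\rangle\}$ is the standard basis of $\mathbb{C}^2$, and $\mathrm{SWAP}|b,c\rangle=|c,b\rangle$ on $\mathbb{C}^2\otimes\mathbb{C}^2$. $T=|0\rangle\langle0|\otimes I_2+|1\rangle\langle1|\otimes\sigma_1$ is the CNOT gate; $T_{AB}$ denotes $T$ with control qubit $A$ and target $B$. For a matrix $U$ on $\mathbb{C}^2\otimes\mathbb{C}^2\otimes\mathbb{C}^2$ (systems $A,B,C$), its Schmidt rank $\mathrm{sr}(U)$ is the least integer $r$ such that $U=\sum_{j=1}^r A_j\otimes B_j\otimes C_j$ with $A_j,B_j,C_j$ complex $2\times 2$ matrices (i.e. the tensor rank of $U$). *)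

(* Defs.v *)
(* Complex numbers are modelled as R[i] (mathcomp-real-closed
   `complex`) for an arbitrary R : realType; every realType is (isomorphic to)
   the real numbers, so R[i] is the field of complex numbers. *)
From HB Require Import structures.
From mathcomp Require Import all_boot all_order all_algebra.
From mathcomp Require Import reals.
From mathcomp Require Export complex mxtens.

Set Implicit Arguments.
Unset Strict Implicit.
Unset Printing Implicit Defensive.

Import GRing.Theory.
Local Open Scope ring_scope.

Section Qubits.
Variable R : realType.
Local Notation C := (R[i]).

(* Kronecker products use mxtens.tensmx ( *t ): index (i,j) |-> i*n+j,
   i.e. the standard convention with the left factor most significant. *)

Definition ket0bra0 : 'M[C]_2 := \matrix_(i, j) ((i == 0 :> nat) && (j == 0 :> nat))%:R.
Definition ket1bra1 : 'M[C]_2 := \matrix_(i, j) ((i == 1 :> nat) && (j == 1 :> nat))%:R.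
Definition sigma1 : 'M[C]_2 := \matrix_(i, j) (i != j :> nat)%:R.
Definition I2 : 'M[C]_2 := 1%:M.

Definition SWAP : 'M[C]_(2 * 2) :=
  \matrix_(k, l) (let: (b', c') := mxtens_unindex k in
                  let: (b, c) := mxtens_unindex l in
                  ((b' == c) && (c' == b))%:R).

Definition CNOT : 'M[C]_(2 * 2) := ket0bra0 *t I2 + ket1bra1 *t sigma1.

Definition Fredkin : 'M[C]_(2 * (2 * 2)) := ket0bra0 *t (I2 *t I2) + ket1bra1 *t SWAP.

Definition U5 : 'M[C]_(2 * (2 * 2)) :=
  castmx (esym (mulnA 2 2 2), esym (mulnA 2 2 2)) (CNOT *t I2) *m Fredkin.

Definition has_sr_decomp (U : 'M[C]_(2 * (2 * 2))) (r : nat) : Prop :=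
  exists (A B D : 'I_r -> 'M[C]_2), U = \sum_(j < r) (A j *t (B j *t D j)).

Definition schmidt_rank_is (U : 'M[C]_(2 * (2 * 2))) (r : nat) : Prop :=
  has_sr_decomp U r /\ forall r', has_sr_decomp U r' -> (r <= r')%N.

End Qubits.

(* Main.v *)
Require Import Defs.
From mathcomp Require Import all_boot all_order all_algebra.
From mathcomp Require Import reals complex mxtens.
Import GRing.Theory.
Local Open Scope ring_scope.

Lemma pencil_lemma (F : fieldType) (n r : nat) (P Q : 'M[F]_(n, r)) (a b : 'rV[F]_r) (Y : 'M[F]_n) :
  (r <= n)%N ->
  P *m diag_mx a *m Q^T *m Y = 1%:M ->
  P *m diag_mx b *m Q^T *m Y *m (P *m diag_mx b *m Q^T) = 0 ->
  P *m diag_mx b *m Q^T != 0 -> False.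
Proof.
move=> rn H1 H0 nz.
have K1u : P *m diag_mx a *m Q^T \in unitmx by case/mulmx1_unit: H1.
have nr : (n <= r)%N.
  rewrite -(mxrank_unit K1u); apply: leq_trans (mxrankM_maxl _ _) _.
  apply: leq_trans (mxrankM_maxl _ _) _; exact: rank_leq_col.
have er : r = n by apply/eqP; rewrite eqn_leq rn nr.
subst r.
move: K1u; rewrite !unitmx_mul unitmx_tr => /andP[/andP[Pu Du] Qu].
set X := Q^T *m Y *m P.
have HX : diag_mx a *m X = 1%:M.
  have e : P *m (diag_mx a *m X) = P by rewrite /X !mulmxA H1 mul1mx.
  by rewrite -(mulKmx Pu (diag_mx a *m X)) e mulVmx.
have Qu' : Q^T \in unitmx by rewrite unitmx_tr.
have HB : diag_mx b *m X *m diag_mx b = 0.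
  have e : P *m (diag_mx b *m X *m diag_mx b) *m Q^T = 0 by rewrite /X !mulmxA -H0 !mulmxA.
  clearbody X; set M := diag_mx b *m X *m diag_mx b.
  have -> : M = invmx P *m (P *m M *m Q^T) *m invmx Q^T.
    by rewrite -mulmxA mulmxK // mulKmx.
  by rewrite e mulmx0 mul0mx.
clearbody X.
have b0 : b = 0.
  apply/rowP => j; rewrite mxE.
  have := congr1 (fun M : 'M[F]_n => M j j) HX; rewrite mul_diag_mx !mxE eqxx /= => hx.
  have := congr1 (fun M : 'M[F]_n => M j j) HB; rewrite mul_mx_diag mul_diag_mx !mxE => hb.
  have xn : X j j != 0.
    apply/eqP => x0; move: hx; rewrite x0 mulr0 => /eqP; rewrite eq_sym oner_eq0 //.
  move/eqP: hb; rewrite !mulf_eq0 (negPf xn) orbF orbb => /eqP //.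
by move: nz; rewrite b0 raddf0 mulmx0 mul0mx eqxx.
Qed.


Ltac ocase2 i := case: i => [[|[|?]] ?]; last by [].
Ltac ocase4 i := case: i => [[|[|[|[|?]]]] ?]; last by [].
Ltac simp := rewrite ?(mul0r, mulr0, mul1r, mulr1, addr0, add0r, mulr1n, mulr0n).

Section Generic.
Variable K : comPzRingType.

Lemma tensmxDl m n p q (A B : 'M[K]_(m, n)) (D : 'M[K]_(p, q)) :
  (A + B) *t D = A *t D + B *t D.
Proof. by apply/matrixP => i j; rewrite !mxE mulrDl. Qed.

Lemma tensmxDr m n p q (A : 'M[K]_(m, n)) (B D : 'M[K]_(p, q)) :
  A *t (B + D) = A *t B + A *t D.
Proof. by apply/matrixP => i j; rewrite !mxE mulrDr. Qed.

Lemma castmxD m n m' n' (e : (m = m') * (n = n')) (A B : 'M[K]_(m, n)) :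
  castmx e (A + B) = castmx e A + castmx e B.
Proof. by case: e => em en; case: m' / em; case: n' / en. Qed.

Lemma tensmxA m n p q r s (A : 'M[K]_(m, n)) (B : 'M[K]_(p, q)) (D : 'M[K]_(r, s)) :
  castmx (esym (mulnA m p r), esym (mulnA n q s)) ((A *t B) *t D) = A *t (B *t D).
Proof.
apply/matrixP => i j.
case: (mxtens_indexP i) => i1 i23; case: (mxtens_indexP i23) => i2 i3.
case: (mxtens_indexP j) => j1 j23; case: (mxtens_indexP j23) => j2 j3.
rewrite castmxE.
have -> : cast_ord (esym (esym (mulnA m p r))) (mxtens_index (i1, mxtens_index (i2, i3)))
   = mxtens_index (mxtens_index (i1, i2), i3).
  by apply: val_inj => /=; rewrite mulnDl addnA mulnA.
have -> : cast_ord (esym (esym (mulnA n q s))) (mxtens_index (j1, mxtens_index (j2, j3)))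
   = mxtens_index (mxtens_index (j1, j2), j3).
  by apply: val_inj => /=; rewrite mulnDl addnA mulnA.
by rewrite !tensmxE mulrA.
Qed.
End Generic.

Section Main.
Variable R : realType.
Local Notation C := R[i].

Definition Emx (a b : nat) : 'M[C]_2 :=
  \matrix_(i, j) ((i == a :> nat) && (j == b :> nat))%:R.

Definition M1c : 'M[C]_(2*2) := \matrix_(k, l)
  (((k == 0 :> nat) && (l == 1 :> nat)) || ((k == 1 :> nat) && (l == 3 :> nat)) ||
   ((k == 2 :> nat) && (l == 0 :> nat)) || ((k == 3 :> nat) && (l == 2 :> nat)))%:R.

Definition K0c : 'M[C]_(2*2) := \matrix_(k, l)
  (((k == 0 :> nat) || (k == 3 :> nat)) && ((l == 0 :> nat) || (l == 3 :> nat)))%:R.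

Lemma M1E : (sigma1 R *t I2 R) *m SWAP R = M1c.
Proof.
apply/matrixP => i j; ocase4 i; ocase4 j.
all: rewrite !mxE /= !big_ord_recr big_ord0 /= !mxE /=; simp.
all: done.
Qed.

Lemma M1sum : M1c = Emx 0 0 *t Emx 0 1 + Emx 0 1 *t Emx 1 1 + Emx 1 0 *t Emx 0 0 + Emx 1 1 *t Emx 1 0.
Proof.
apply/matrixP => i j; ocase4 i; ocase4 j.
all: rewrite !mxE /=; simp.
all: done.
Qed.

Lemma kprod00 : ket0bra0 R *m ket0bra0 R = ket0bra0 R.
Proof. apply/matrixP => i j; ocase2 i; ocase2 j; rewrite !mxE /= !big_ord_recr big_ord0 /= !mxE /=; simp; done. Qed.
Lemma kprod11 : ket1bra1 R *m ket1bra1 R = ket1bra1 R.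
Proof. apply/matrixP => i j; ocase2 i; ocase2 j; rewrite !mxE /= !big_ord_recr big_ord0 /= !mxE /=; simp; done. Qed.
Lemma kprod01 : ket0bra0 R *m ket1bra1 R = 0.
Proof. apply/matrixP => i j; ocase2 i; ocase2 j; rewrite !mxE /= !big_ord_recr big_ord0 /= !mxE /=; simp; done. Qed.
Lemma kprod10 : ket1bra1 R *m ket0bra0 R = 0.
Proof. apply/matrixP => i j; ocase2 i; ocase2 j; rewrite !mxE /= !big_ord_recr big_ord0 /= !mxE /=; simp; done. Qed.

Lemma conj2 : U5 R = ket0bra0 R *t (I2 R *t I2 R) + ket1bra1 R *t ((sigma1 R *t I2 R) *m SWAP R).
Proof.
rewrite /U5 /CNOT /Fredkin tensmxDl castmxD !tensmxA.
rewrite mulmxDl !mulmxDr !tensmx_mul kprod00 kprod11 kprod01 kprod10 !tens0mx addr0 add0r.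
by rewrite /I2 !mulmx1.
Qed.


Definition Adec (j : 'I_5) : 'M[C]_2 := if val j == 0%N then ket0bra0 R else ket1bra1 R.
Definition Bdec (j : 'I_5) : 'M[C]_2 :=
  match val j with 0 => I2 R | 1 => Emx 0 0 | 2 => Emx 0 1 | 3 => Emx 1 0 | _ => Emx 1 1 end.
Definition Ddec (j : 'I_5) : 'M[C]_2 :=
  match val j with 0 => I2 R | 1 => Emx 0 1 | 2 => Emx 1 1 | 3 => Emx 0 0 | _ => Emx 1 0 end.

Lemma upper : has_sr_decomp (U5 R) 5.
Proof.
exists Adec, Bdec, Ddec.
rewrite conj2 M1E M1sum !big_ord_recr big_ord0 /= add0r.
by rewrite /Adec /Bdec /Ddec /= !tensmxDr !addrA.
Qed.

Definition slice (a : 'I_2) (M : 'M[C]_(2*(2*2))) : 'M[C]_(2*2) :=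
  \matrix_(k, l) M (mxtens_index (a, mxtens_index ((mxtens_unindex k).1, (mxtens_unindex l).1)))
                   (mxtens_index (a, mxtens_index ((mxtens_unindex k).2, (mxtens_unindex l).2))).

Definition Pm r (B : 'I_r -> 'M[C]_2) : 'M[C]_(2*2, r) :=
  \matrix_(k, j) B j (mxtens_unindex k).1 (mxtens_unindex k).2.

Arguments Pm {r}.

Lemma slice_sum r (A B D : 'I_r -> 'M[C]_2) (a : 'I_2) :
  slice a (\sum_(j < r) A j *t (B j *t D j))
  = Pm B *m diag_mx (\row_j A j a a) *m (Pm D)^T.
Proof.
apply/matrixP => k l; rewrite mul_mx_diag !mxE summxE; apply: eq_bigr => j _.
by rewrite !tensmxE !mxE mulrA [_ * A j a a]mulrC -!mulrA.
Qed.

Lemma slice1 : slice ord_max (U5 R) = M1c.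
Proof.
rewrite conj2 M1E.
apply/matrixP => i j; ocase4 i; ocase4 j.
all: rewrite !mxE /=; simp.
all: done.
Qed.

Lemma slice0 : slice ord0 (U5 R) = K0c.
Proof.
rewrite conj2 M1E.
apply/matrixP => i j; ocase4 i; ocase4 j.
all: rewrite !mxE /=; simp.
all: done.
Qed.

Lemma M1inv : M1c *m M1c^T = 1%:M.
Proof.
apply/matrixP => i j; ocase4 i; ocase4 j.
all: rewrite !mxE /= !big_ord_recr big_ord0 /= !mxE /=; simp.
all: done.
Qed.

Lemma K0nil : K0c *m M1c^T *m K0c = 0.
Proof.
apply/matrixP => i j; ocase4 i; ocase4 j.
all: rewrite !mxE /= !big_ord_recr big_ord0 /= ?mxE /= ?big_ord_recr ?big_ord0 /= ?mxE /=; simp.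
all: done.
Qed.

Lemma K0nz : K0c != 0.
Proof.
apply/negP => /eqP /matrixP /(_ ord0 ord0); rewrite !mxE /=; simp.
by move/eqP; rewrite oner_eq0.
Qed.

Lemma lower r : has_sr_decomp (U5 R) r -> (5 <= r)%N.
Proof.
case=> A [B [D hU]].
rewrite leqNgt; apply/negP => hr.
have s1 := slice_sum _ A B D ord_max.
have s0 := slice_sum _ A B D ord0.
rewrite -hU slice1 in s1.
rewrite -hU slice0 in s0.
apply: (@pencil_lemma _ (2*2) r (Pm B) (Pm D) (\row_j A j ord_max ord_max) (\row_j A j ord0 ord0) M1c^T).
- by rewrite -ltnS.
- by rewrite -s1 M1inv.
- by rewrite -s0 K0nil.
- by rewrite -s0 K0nz.
Qed.

End Main.

Theorem mainTheorem15 (R : realType) :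
  schmidt_rank_is (U5 R) 5
  /\ U5 R = ket0bra0 R *t (I2 R *t I2 R) + ket1bra1 R *t ((sigma1 R *t I2 R) *m SWAP R).
Proof.
split; last exact: conj2.
split; first exact: upper.
exact: lower.
Qed.
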